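(* Every W-state graph is $2$-connected.
   Context: Graphs may have parallel edges but no loops. A half-edge $2$-colouring $c$ of $G$ assigns to each pair $(e,w)$ with $w$ an endpoint of edge $e$ a colour in $\{0,1\}$ (0 = blue, 1 = red). An edge $e=uv$ is bichromatic if $c(e,u)\neq c(e,v)$ and monochromatic otherwise; standing convention: monochromatic edges are blue at both ends. A graph is matching-covered if every edge lies in some perfect matching. A W-state graph is a half-edge $2$-coloured matching-covered graph $(G,c)$ in which every perfect matching contains exactly one bichromatic edge, and every vertex $v$ is incident with an edge $e$ with $c(e,v)=1$. *)

(* Defs.v *)
From mathcomp Require Import all_boot.
Set Implicit Arguments. Unset Strict Implicit. Unset Printing Implicit Defensive.

(* A loopless multigraph: vertex type V, edge type E (parallel edges allowed),
   each edge e has endpoints s e and t e with s e != t e (no loops).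
   A half-edge 2-colouring is c : E -> V -> bool, where c e w is the colour of
   the half-edge (e,w) for w an endpoint of e (values at non-endpoints are
   irrelevant). false = blue (0), true = red (1). *)

Section Graph.
Variables (V E : finType) (s t : E -> V).

Definition incident (e : E) (x : V) : bool := (s e == x) || (t e == x).

Definition perfect_matching (M : {set E}) : bool :=
  [forall x : V, #|[set e in M | incident e x]| == 1].

Definition matching_covered : Prop :=
  forall e : E, exists M : {set E}, perfect_matching M /\ e \in M.

Variable c : E -> V -> bool.

Definition bichromatic (e : E) : bool := c e (s e) != c e (t e).

Definition mono_blue : Prop :=
  forall e : E, ~~ bichromatic e -> (c e (s e) = false /\ c e (t e) = false).

Definition W_state_graph : Prop :=
  [/\ (forall e, s e != t e),
      mono_blue,
      matching_covered,
      (forall M : {set E}, perfect_matching M ->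
          #|[set e in M | bichromatic e]| = 1)
    & (forall v : V, exists e : E, incident e v /\ c e v = true)].

End Graph.

Section Conn.
Variables (V E : finType) (s t : E -> V).

Definition adj (x y : V) : bool :=
  [exists e : E, ((s e == x) && (t e == y)) || ((s e == y) && (t e == x))].

Definition connected_on (S : {set V}) : Prop :=
  forall x y, x \in S -> y \in S ->
    connect [rel a b | [&& a \in S, b \in S & adj a b]] x y.

Definition two_connected : Prop :=
  [/\ 2 <= #|V|, connected_on [set: V]
    & forall x : V, connected_on [set~ x]].

End Conn.

(* Main.v *)
Require Import Defs.
From mathcomp Require Import all_boot.
Set Implicit Arguments. Unset Strict Implicit. Unset Printing Implicit Defensive.

Section W.
Variables (V E : finType) (s t : E -> V) (c : E -> V -> bool).
Hypothesis noloop : forall e, s e != t e.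
Hypothesis mb : mono_blue s t c.
Hypothesis mc : matching_covered s t.
Hypothesis one : forall M, perfect_matching s t M ->
  #|[set e in M | bichromatic s t c e]| = 1.
Hypothesis red : forall v, exists e, incident s t e v /\ c e v = true.

Lemma pm_uniq M e1 e2 x : perfect_matching s t M -> e1 \in M -> e2 \in M ->
  incident s t e1 x -> incident s t e2 x -> e1 = e2.
Proof.
move=> /forallP/(_ x)/cards1P [f hf] h1 h2 i1 i2.
have : e1 \in [set e in M | incident s t e x] by rewrite inE h1 i1.
have : e2 \in [set e in M | incident s t e x] by rewrite inE h2 i2.
by rewrite hf !inE => /eqP -> /eqP ->.
Qed.

Lemma red_bichrom e v : incident s t e v -> c e v = true -> bichromatic s t c e.
Proof.
move=> hi hc; case hb: (bichromatic s t c e) => //.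
have [h1 h2] : c e (s e) = false /\ c e (t e) = false by apply: mb; rewrite hb.
by move: hi => /orP [] /eqP ?; subst v; congruence.
Qed.

Lemma no_split (X : {set V}) u v : u \in X -> v \notin X ->
  (forall e, (s e \in X) = (t e \in X)) -> False.
Proof.
move=> hu hv hX.
have side e w : incident s t e w -> (s e \in X) = (w \in X).
  by case/orP => /eqP <-; rewrite ?hX.
have [eu [iu cu]] := red u; have [ev [iv cv]] := red v.
have [M [pM euM]] := mc eu; have [N [pN evN]] := mc ev.
pose K := [set e in M | s e \in X] :|: [set e in N | s e \notin X].
have pK : perfect_matching s t K.
  apply/forallP => w; case hw: (w \in X).
  - have -> : [set e in K | incident s t e w] = [set e in M | incident s t e w].
      apply/setP => e; rewrite !inE.
      case hi: (incident s t e w); rewrite ?andbF // !andbT.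
      by rewrite (side _ _ hi) hw /= andbT andbF orbF.
    by move/forallP: pM => /(_ w).
  - have -> : [set e in K | incident s t e w] = [set e in N | incident s t e w].
      apply/setP => e; rewrite !inE.
      case hi: (incident s t e w); rewrite ?andbF // !andbT.
      by rewrite (side _ _ hi) hw /= andbT andbF.
    by move/forallP: pN => /(_ w).
have := one pK.
have bu := red_bichrom iu cu; have bv := red_bichrom iv cv.
have suX : s eu \in X by rewrite (side _ _ iu).
have svX : s ev \notin X by rewrite (side _ _ iv).
have neq : eu != ev by apply/eqP => eq; move: svX; rewrite -eq suX.
have : [set eu; ev] \subset [set e in K | bichromatic s t c e].
  apply/subsetP => e; rewrite !inE => /orP [] /eqP ->.
    by rewrite bu euM suX.
  by rewrite bv evN svX orbT.
by move/subset_leq_card; rewrite cards2 neq => h1 h2; rewrite h2 in h1.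
Qed.

Lemma sum_eq_pt (S : {set V}) (a : V) : \sum_(x in S) (a == x : nat) = (a \in S).
Proof.
rewrite big_mkcond (bigD1 a) //= eqxx big1; first by rewrite addn0; case: (a \in S).
by move=> x hx; rewrite eq_sym (negbTE hx); case: (x \in S).
Qed.

Lemma pm_even M (S : {set V}) : perfect_matching s t M ->
  (forall e, e \in M -> (s e \in S) = (t e \in S)) -> ~~ odd #|S|.
Proof.
move=> pM hS.
have h1 : #|S| = \sum_(x in S) \sum_(e in M) (incident s t e x : nat).
  rewrite -sum1_card; apply: eq_bigr => x _.
  move/forallP: pM => /(_ x)/eqP <-.
  rewrite -sum1_card big_mkcond [RHS]big_mkcond /=.
  by apply: eq_bigr => e _; rewrite !inE; case: (e \in M); case: (incident s t e x).
rewrite h1 exchange_big /=.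
apply: (big_ind (fun n => ~~ odd n)) => //.
  by move=> m n hm hn; rewrite oddD (negbTE hm) (negbTE hn).
move=> e he.
have -> : \sum_(x in S) (incident s t e x : nat) =
          \sum_(x in S) ((s e == x : nat) + (t e == x : nat)).
  apply: eq_bigr => x _; rewrite /incident.
  case: (eqVneq (s e) x) => [<-|]; last by case: (t e == x).
  by rewrite eq_sym (negbTE (noloop e)).
by rewrite big_split /= !sum_eq_pt (hS e he) addnn odd_double.
Qed.

Lemma cut_lemma (A : {set V}) x : x \notin A ->
  (forall e, s e \in A -> t e \notin A -> t e = x) ->
  (forall e, t e \in A -> s e \notin A -> s e = x) ->
  (forall e, (s e \in A) = (t e \in A)) \/
  (forall e, (s e \in x |: A) = (t e \in x |: A)).
Proof.
move=> xA h1 h2.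
have F1 e : (s e \in A) != (t e \in A) -> incident s t e x /\ ((s e \in A) || (t e \in A)).
  case hs: (s e \in A); case ht: (t e \in A) => // _.
    by rewrite /incident (h1 e hs) ?ht // eqxx orbT.
  by rewrite /incident (h2 e ht) ?hs // eqxx.
have F2 e : (s e \in x |: A) != (t e \in x |: A) ->
    incident s t e x /\ (s e \notin A) && (t e \notin A).
  rewrite !in_setU1.
  case hs: (s e \in A); case ht: (t e \in A); rewrite ?orbT //=.
  - have := h1 e hs; rewrite ht => /(_ isT) ->; by rewrite eqxx.
  - have := h2 e ht; rewrite hs => /(_ isT) ->; by rewrite eqxx.
  - by rewrite /incident; case: (s e == x); case: (t e == x); rewrite ?orbT.
case: (boolP [forall e, (s e \in A) == (t e \in A)]) => [/forallP h|].
  by left => e; apply/eqP/h.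
rewrite negb_forall => /existsP [e1 he1]; right => e2.
case: (boolP ((s e2 \in x |: A) == (t e2 \in x |: A))) => [/eqP//|he2].
exfalso.
have [i1 a1] := F1 _ he1; have [i2 a2] := F2 _ he2.
have [M1 [pM1 e1M]] := mc e1; have [M2 [pM2 e2M]] := mc e2.
have ev1 := pm_even (S := x |: A) pM1.
have ev2 := pm_even (S := A) pM2.
have odd1 : odd #|A|.
  have : ~~ odd #|x |: A|.
    apply: ev1 => e he; apply/eqP; case: (boolP (_ == _)) => // hne; exfalso.
    have [ie ae] := F2 _ hne.
    have ee := pm_uniq pM1 he e1M ie i1; subst e.
    by move: a1 ae; case: (s e1 \in A); case: (t e1 \in A).
  by rewrite cardsU1 xA /= negbK.
move: odd1; apply/negP; apply: ev2 => e he; apply/eqP; case: (boolP (_ == _)) => // hne; exfalso.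
have [ie ae] := F1 _ hne.
have ee := pm_uniq pM2 he e2M ie i2; subst e.
by move: a2 ae; case: (s e2 \in A); case: (t e2 \in A).
Qed.

End W.

Theorem mainTheorem6 (V E : finType) (s t : E -> V) (c : E -> V -> bool) :
  W_state_graph s t c -> two_connected s t.
Proof.
case=> noloop mb mc one red.
have ns := no_split mb mc one red.
split.
- case: (pickP (@predT V)) => [v _ | hnone].
    have [e [ie _]] := red v.
    have : [set s e; t e] \subset [set: V] by apply/subsetP => y; rewrite inE.
    by move/subset_leq_card; rewrite cards2 noloop cardsT.
  exfalso.
  have p0 : perfect_matching s t set0 by apply/forallP => x; have := hnone x.
  have := one _ p0.
  have -> : [set e in (set0 : {set E}) | bichromatic s t c e] = set0.
    by apply/setP => e; rewrite !inE.
  by rewrite cards0.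
- move=> x y _ _; apply/idPn => hn.
  pose R := [rel a b | [&& a \in [set: V], b \in [set: V] & adj s t a b]].
  apply: (ns [set z | connect R x z] x y); rewrite ?inE ?connect0 //.
  have cl a b : adj s t a b -> connect R x a -> connect R x b.
    move=> hab hxa; apply: (connect_trans hxa); apply: connect1.
    by rewrite /= !inE.
  move=> e; rewrite !inE; apply/idP/idP; apply: cl; apply/existsP; exists e;
    by rewrite !eqxx ?orbT.
- move=> x a b; rewrite !inE => ha hb; apply/idPn => hn.
  set S := [set~ x].
  pose R := [rel p q | [&& p \in S, q \in S & adj s t p q]].
  pose A := [set z in S | connect R a z].
  have aA : a \in A by rewrite !inE ha connect0.
  have bA : b \notin A by rewrite !inE hb /=.
  have xA : x \notin A by rewrite !inE eqxx.
  have cl p q : p \in A -> q \notin A -> adj s t p q -> q = x.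
    rewrite !inE => /andP [hp hap] hq hpq; apply/eqP; apply/negPn/negP => qx.
    move: hq; rewrite qx /= => /negP; apply.
    apply: (connect_trans hap); apply: connect1; rewrite /= /S !inE qx hpq andbT; by move: hp; rewrite /S ?inE andbT.
  have h1 e : s e \in A -> t e \notin A -> t e = x.
    move=> hp hq; apply: cl hp hq _; apply/existsP; exists e; by rewrite !eqxx.
  have h2 e : t e \in A -> s e \notin A -> s e = x.
    move=> hp hq; apply: cl hp hq _; apply/existsP; exists e; by rewrite !eqxx orbT.
  case: (cut_lemma noloop mc xA h1 h2) => hX.
    exact: (ns A a b aA bA hX).
  have aX : a \in x |: A by rewrite in_setU1 aA orbT.
  have bX : b \notin x |: A by rewrite in_setU1 negb_or bA andbT.
  exact: (ns (x |: A) a b aX bX hX).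
Qed.
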